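(* The class of $\tau_{\mathcal{I}}$-Świątkowski functions coincides with the class of $\tau_\ast$-Świątkowski functions.
   Context: $\tau_\ast=\{U\setminus M: U\text{ Euclidean open},\ M\text{ meager}\}$. $\tau_{\mathcal{I}}$ is the $\mathcal{I}$-density topology: for a set $A\subset\mathbb{R}$ with the Baire property, $x$ is an $\mathcal{I}$-density point of $A$ if for every increasing sequence $(n_m)$ of natural numbers there is a subsequence $(n_{m_p})$ such that the characteristic functions of $n_{m_p}\cdot(A-x)\cap[-1,1]$ converge to $1$ on $[-1,1]$ outside a meager set; $\tau_{\mathcal{I}}$ consists of the sets $A$ with the Baire property every point of which is an $\mathcal{I}$-density point of $A$. For a topology $\sigma$ and $f\colon\mathbb{R}\to\mathbb{R}$, $\mathrm{C}_\sigma(f)$ is the set of points at which $f\colon(\mathbb{R},\sigma)\to\mathbb{R}$ (Euclidean) is continuous, and $f$ is a $\sigma$-Świątkowski function if for all $a,b$ with $f(a)<f(b)$ there exists $x\in\mathrm{C}_\sigma(f)$ strictly between $a$ and $b$ with $f(a)<f(x)<f(b)$. *)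

(* Defs.v *)
From Stdlib Require Import Reals Rtopology.
Open Scope R_scope.

Definition nowhere_dense (E : R -> Prop) : Prop :=
  forall x, ~ interior (adherence E) x.

Definition meager (M : R -> Prop) : Prop :=
  exists E : nat -> (R -> Prop),
    (forall n, nowhere_dense (E n)) /\
    (forall x, M x -> exists n, E n x).

Definition baire_property (A : R -> Prop) : Prop :=
  exists U M, open_set U /\ meager M /\
    forall x, A x <-> ((U x /\ ~ M x) \/ (~ U x /\ M x)).

Definition tau_star (A : R -> Prop) : Prop :=
  exists U M, open_set U /\ meager M /\
    forall x, A x <-> (U x /\ ~ M x).

Definition in_scaled (A : R -> Prop) (x : R) (n : nat) (t : R) : Prop :=
  exists a, A a /\ t = INR n * (a - x).

Definition strictly_increasing (s : nat -> nat) : Prop :=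
  forall i j, (i < j)%nat -> (s i < s j)%nat.

(* x is an I-density point of A: for every increasing sequence (n_m) there is
   a subsequence (n_{m_p}) such that the characteristic functions of
   n_{m_p}(A - x) ∩ [-1,1] converge to 1 on [-1,1] outside a meager set
   (a {0,1}-valued sequence converges to 1 iff it is eventually 1). *)
Definition I_density_point (A : R -> Prop) (x : R) : Prop :=
  forall n : nat -> nat, strictly_increasing n ->
    exists m : nat -> nat, strictly_increasing m /\
      exists M, meager M /\
        forall t, -1 <= t <= 1 -> ~ M t ->
          exists N, forall p, (N <= p)%nat -> in_scaled A x (n (m p)) t.

Definition tau_I (A : R -> Prop) : Prop :=
  baire_property A /\ forall x, A x -> I_density_point A x.

Definition sigma_continuous_at (sigma : (R -> Prop) -> Prop) (f : R -> R) (x : R) : Prop :=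
  forall eps, 0 < eps ->
    exists V, sigma V /\ V x /\ forall y, V y -> Rabs (f y - f x) < eps.

Definition swiatkowski (sigma : (R -> Prop) -> Prop) (f : R -> R) : Prop :=
  forall a b, f a < f b ->
    exists x, sigma_continuous_at sigma f x /\
      Rmin a b < x < Rmax a b /\ f a < f x < f b.

(* Main.v *)
Require Import Defs.
From Stdlib Require Import Reals Rtopology Lra Lia Classical ClassicalEpsilon List Cantor Arith.
Open Scope R_scope.

Definition avoidable (E : R -> Prop) : Prop :=
  forall c d, c < d -> exists c' d', c < c' /\ c' < d' /\ d' < d /\
     forall z, c' <= z <= d' -> ~ E z.

Lemma Rmin_facts a b : Rmin a b <= a /\ Rmin a b <= b /\ (Rmin a b = a \/ Rmin a b = b).
Proof. unfold Rmin; destruct Rle_dec; lra. Qed.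
Lemma Rmax_facts a b : a <= Rmax a b /\ b <= Rmax a b /\ (Rmax a b = a \/ Rmax a b = b).
Proof. unfold Rmax; destruct Rle_dec; lra. Qed.
Lemma Rabs_facts r : r <= Rabs r /\ - r <= Rabs r /\ (Rabs r = r \/ Rabs r = - r).
Proof. unfold Rabs; destruct Rcase_abs; lra. Qed.

Lemma nd_avoid E : nowhere_dense E -> avoidable E.
Proof.
  intros H c d Hcd.
  set (m := (c+d)/2).
  assert (Hr : 0 < (d-c)/2) by lra.
  assert (exists y, Rabs (y - m) < (d-c)/2 /\ ~ adherence E y) as [y [Hy1 Hy2]].
  { apply NNPP; intro Hn. apply (H m). exists (mkposreal _ Hr). intros y Hy. idtac.
    apply NNPP; intro Hy'. apply Hn. exists y. split; [exact Hy | exact Hy']. }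
  assert (exists V, neighbourhood V y /\ ~ exists z, V z /\ E z) as [V [[del Hdel] HV]].
  { apply NNPP; intro Hn. apply Hy2. intros V HVn. apply NNPP; intro Hz. apply Hn.
    exists V. split; [exact HVn|]. intros [z Hz']. apply Hz. exists z. exact Hz'. }
  destruct (Rabs_facts (y - m)) as [Ha1 [Ha2 _]].
  pose proof (cond_pos del) as Hdp.
  set (r := Rmin del (Rmin (y - c) (d - y)) / 2).
  destruct (Rmin_facts (y-c) (d-y)) as [Hm1 [Hm2 Hm3]].
  destruct (Rmin_facts del (Rmin (y - c) (d - y))) as [Hm4 [Hm5 Hm6]].
  assert (Hr1 : 0 < r) by (unfold r, m in *; lra).
  exists (y - r), (y + r). unfold r, m in *.
  repeat split; try lra.
  intros z Hz HE. apply HV. exists z. split; [|exact HE].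
  apply Hdel. unfold disc. apply Rabs_def1; lra.
Qed.

Lemma avoid_nd E : avoidable E -> nowhere_dense E.
Proof.
  intros H x [del Hdel]. pose proof (cond_pos del) as Hd.
  destruct (H (x - del) (x + del)) as [c' [d' [H1 [H2 [H3 H4]]]]]; [lra|].
  assert (Had : adherence E ((c'+d')/2)).
  { apply Hdel. unfold disc. apply Rabs_def1; lra. }
  assert (Hp : 0 < (d' - c')/2) by lra.
  destruct (Had (fun w => c' < w < d')) as [y [Hy1 Hy2]].
  { exists (mkposreal _ Hp). intros w Hw. unfold disc in Hw. simpl in Hw.
    apply Rabs_def2 in Hw. lra. }
  apply (H4 y); [lra | exact Hy2].
Qed.

Lemma avoid_union A B : avoidable A -> avoidable B -> avoidable (fun z => A z \/ B z).
Proof.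
  intros HA HB c d Hcd.
  destruct (HA c d Hcd) as [c1 [d1 [H1 [H2 [H3 H4]]]]].
  destruct (HB c1 d1 H2) as [c2 [d2 [H5 [H6 [H7 H8]]]]].
  exists c2, d2. repeat split; try lra.
  intros z Hz [HAz|HBz]; [apply (H4 z) | apply (H8 z)]; auto; lra.
Qed.

Lemma avoid_sub A B : (forall z, A z -> B z) -> avoidable B -> avoidable A.
Proof.
  intros HAB HB c d Hcd. destruct (HB c d Hcd) as [c1 [d1 [H1 [H2 [H3 H4]]]]].
  exists c1, d1. repeat split; auto. intros z Hz HA. apply (H4 z Hz (HAB z HA)).
Qed.

Lemma avoid_empty : avoidable (fun _ => False).
Proof.
  intros c d Hcd. exists (c + (d-c)/3), (d - (d-c)/3). repeat split; try lra. auto.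
Qed.

Lemma avoid_finN (F : nat -> R -> Prop) N : (forall i, avoidable (F i)) ->
  avoidable (fun z => exists i, (i <= N)%nat /\ F i z).
Proof.
  intros HF. induction N.
  - apply avoid_sub with (F 0%nat); [|apply HF].
    intros z [i [Hi Hz]]. assert (i = 0%nat) by lia. subst; auto.
  - apply avoid_sub with (fun z => (exists i, (i <= N)%nat /\ F i z) \/ F (S N) z).
    + intros z [i [Hi Hz]]. destruct (Nat.eq_dec i (S N)) as [->|Hne]; [now right|].
      left. exists i. split; [lia|auto].
    + apply avoid_union; auto.
Qed.

Lemma avoid_list {S : Type} (E : S -> nat -> R -> Prop) (h : list S) N :
  (forall t i, In t h -> avoidable (E t i)) ->
  avoidable (fun z => exists t i, In t h /\ (i <= N)%nat /\ E t i z).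
Proof.
  induction h as [|s h IH]; intros HE.
  - apply avoid_sub with (fun _ => False); [|apply avoid_empty].
    intros z [t [i [[] _]]].
  - apply avoid_sub with (fun z => (exists i, (i <= N)%nat /\ E s i z) \/
                                 (exists t i, In t h /\ (i <= N)%nat /\ E t i z)).
    + intros z [t [i [[<-|Hin] [Hi Hz]]]]; [left; eauto | right; eauto 6].
    + apply avoid_union.
      * apply avoid_finN. intros i. apply HE. now left.
      * apply IH. intros t i Hin. apply HE. now right.
Qed.

Fixpoint iterl {A : Type} (f : A -> A) (x : A) (n : nat) : A :=
  match n with O => x | S n => f (iterl f x n) end.

Lemma BM (St : Type) (c d : St -> R) (E : St -> nat -> R -> Prop) (G : St -> Prop)
  (Rel : St -> St -> Prop) :
  (forall s, G s -> c s < d s /\ forall i, avoidable (E s i)) ->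
  (forall s, G s -> forall c' d', c s < c' -> c' < d' -> d' < d s ->
     exists s', G s' /\ Rel s s' /\ c' < c s' /\ d s' < d') ->
  forall s0, G s0 ->
  exists (sq : nat -> St) y, sq 0%nat = s0 /\
    (forall k, G (sq k) /\ Rel (sq k) (sq (S k))) /\
    (forall k, c (sq k) < y < d (sq k)) /\
    (forall k i, ~ E (sq k) i y).
Proof.
  intros HG Hstep s0 Hs0.
  set (T := fun (h hh : list St) => forall s rest, h = s :: rest -> (forall t, In t h -> G t) ->
     exists s', hh = s' :: h /\ G s' /\ Rel s s' /\ c s < c s' /\ d s' < d s /\
       forall z, c s' <= z <= d s' -> forall t i, In t h -> (i <= length h)%nat -> ~ E t i z).
  assert (Hex : forall h, exists h', T h h').
  { intros h. destruct h as [|s rest].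
    - exists nil. intros s rest' Heq. discriminate.
    - destruct (classic (forall t, In t (s :: rest) -> G t)) as [HGa|HnG].
      + assert (Gs : G s) by (apply HGa; now left).
        destruct (HG s Gs) as [Hcd _].
        destruct (avoid_list E (s :: rest) (length (s :: rest))
                    (fun t i Hin => proj2 (HG t (HGa t Hin)) i) (c s) (d s) Hcd)
          as [c1 [d1 [H1 [H2 [H3 H4]]]]].
        destruct (Hstep s Gs c1 d1 H1 H2 H3) as [s' [Gs' [Rs' [H5 H6]]]].
        exists (s' :: s :: rest). intros s2 rest2 Heq _. injection Heq as <- <-.
        exists s'. repeat split; auto; try lra.
        intros z Hz t i Hin Hi HE. apply (H4 z); [lra|]. exists t, i. auto.
      + exists nil. intros s2 rest2 Heq HGa. contradiction. }
  set (f := fun h => proj1_sig (constructive_indefinite_description _ (Hex h))).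
  assert (Hf : forall h, T h (f h)) by (intros h; exact (proj2_sig (constructive_indefinite_description _ (Hex h)))).
  clearbody f.
  set (hist := iterl f (s0 :: nil)).
  set (sq := fun k => match hist k with s :: _ => s | nil => s0 end).
  assert (Inv : forall k, (forall t, In t (hist k) -> G t) /\
                 (exists rest, hist k = sq k :: rest) /\ length (hist k) = S k).
  { induction k as [|k IH].
    - simpl. split; [intros t [<-|[]]; auto|]. split; [exists nil; reflexivity|reflexivity].
    - destruct IH as [IH1 [[rest IH2] IH3]].
      destruct (Hf (hist k) (sq k) rest IH2 IH1) as [s' [E1 [E2 _]]].
      assert (Hh : hist (S k) = s' :: hist k) by exact E1.
      assert (Hsq : sq (S k) = s') by (unfold sq; rewrite Hh; reflexivity).
      rewrite Hh, Hsq. split; [intros t [<-|Hin]; auto|].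
      split; [exists (hist k); reflexivity| simpl; lia]. }
  assert (Key : forall k, hist (S k) = sq (S k) :: hist k /\ G (sq (S k)) /\
     Rel (sq k) (sq (S k)) /\ c (sq k) < c (sq (S k)) /\ d (sq (S k)) < d (sq k) /\
     forall z, c (sq (S k)) <= z <= d (sq (S k)) -> forall t i, In t (hist k) ->
        (i <= S k)%nat -> ~ E t i z).
  { intros k. destruct (Inv k) as [IH1 [[rest IH2] IH3]].
    destruct (Hf (hist k) (sq k) rest IH2 IH1) as [s' [E1 [E2 [E3 [E4 [E5 E6]]]]]].
    assert (Hh : hist (S k) = s' :: hist k) by exact E1.
    assert (Hsq : sq (S k) = s') by (unfold sq; rewrite Hh; reflexivity).
    rewrite Hsq. repeat split; auto. rewrite <- IH3. exact E6. }
  assert (Gk : forall k, G (sq k)).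
  { intros [|k]; [apply (Inv 0%nat); unfold sq; simpl; now left | apply (Key k)]. }
  assert (Mon : forall k j, (k <= j)%nat -> c (sq k) <= c (sq j) /\ d (sq j) <= d (sq k)).
  { intros k j Hkj. induction Hkj; [lra|].
    destruct (Key m) as [_ [_ [_ [K1 [K2 _]]]]]. lra. }
  assert (Cd : forall k, c (sq k) < d (sq k)) by (intros k; apply (HG _ (Gk k))).
  assert (Cross : forall j k, c (sq j) <= d (sq k)).
  { intros j k. destruct (le_lt_dec j k) as [H|H].
    - destruct (Mon j k H). pose proof (Cd k). lra.
    - destruct (Mon k j (Nat.lt_le_incl _ _ H)). pose proof (Cd j). lra. }
  destruct (completeness (fun r => exists k, r = c (sq k))) as [y [Hy1 Hy2]].
  { exists (d (sq 0%nat)). intros r [k ->]. apply Cross. }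
  { exists (c (sq 0%nat)), 0%nat. reflexivity. }
  assert (Yin : forall k, c (sq k) <= y <= d (sq k)).
  { intros k. split; [apply Hy1; now exists k|].
    apply Hy2. intros r [j ->]. apply Cross. }
  assert (Mem : forall j K, (j <= K)%nat -> In (sq j) (hist K)).
  { intros j K HjK. induction HjK.
    - destruct (Inv j) as [_ [[rest ->] _]]. now left.
    - rewrite (proj1 (Key m)). now right. }
  exists sq, y. split; [reflexivity|]. split; [intros k; split; [apply Gk|apply Key]|].
  split.
  - intros k. destruct (Key k) as [_ [_ [_ [K1 [K2 _]]]]].
    destruct (Yin (S k)). lra.
  - intros k i. set (K := Nat.max k i).
    destruct (Key K) as [_ [_ [_ [_ [_ K6]]]]].
    apply (K6 y (Yin (S K))); [apply Mem; unfold K; lia | unfold K; lia].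
Qed.

Lemma baire2 (A : nat -> nat -> R -> Prop) c d : c < d -> (forall j i, avoidable (A j i)) ->
  exists y, c < y < d /\ forall j i, ~ A j i y.
Proof.
  intros Hcd HA.
  destruct (BM ((R * R) * nat) (fun s => fst (fst s)) (fun s => snd (fst s))
     (fun s => A (snd s)) (fun s => fst (fst s) < snd (fst s))
     (fun s s' => snd s' = S (snd s))) with (s0 := ((c, d), 0%nat))
    as [sq [y [H0 [H1 [H2 H3]]]]]; simpl; auto.
  - intros s Hs c' d' H1 H2 H3. exists ((c' + (d'-c')/3, d' - (d'-c')/3), S (snd s)).
    simpl. repeat split; lra.
  - assert (Hk : forall k, snd (sq k) = k).
    { induction k; [rewrite H0; reflexivity|]. rewrite (proj2 (H1 k)), IHk. reflexivity. }
    exists y. split; [specialize (H2 0%nat); rewrite H0 in H2; exact H2|].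
    intros j i. specialize (H3 j i). rewrite Hk in H3. exact H3.
Qed.

Lemma scale_avoid E x lam : avoidable E -> 0 < lam ->
  avoidable (fun t => exists a, E a /\ t = lam * (a - x)).
Proof.
  intros HE Hl c d Hcd.
  set (u := / lam).
  assert (Hu : lam * u = 1) by (unfold u; field; lra).
  assert (Hu0 : 0 < u) by (unfold u; apply Rinv_0_lt_compat; lra).
  destruct (HE (x + c * u) (x + d * u)) as [c1 [d1 [H1 [H2 [H3 H4]]]]]; [nra|].
  assert (Ec : lam * (c * u) = c) by (unfold u; field; lra).
  assert (Ed : lam * (d * u) = d) by (unfold u; field; lra).
  assert (lam * (c * u) < lam * (c1 - x)) by (apply Rmult_lt_compat_l; lra).
  assert (lam * (d1 - x) < lam * (d * u)) by (apply Rmult_lt_compat_l; lra).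
  assert (lam * (c1 - x) < lam * (d1 - x)) by (apply Rmult_lt_compat_l; lra).
  exists (lam * (c1 - x)), (lam * (d1 - x)). repeat split; try lra.
  intros z Hz [a [Ha ->]]. apply (H4 a); [|exact Ha].
  destruct Hz as [Hz1 Hz2].
  apply Rmult_le_reg_l in Hz1; [|lra]. apply Rmult_le_reg_l in Hz2; [|lra]. lra.
Qed.

Lemma sinc_ge m : strictly_increasing m -> forall p, (p <= m p)%nat.
Proof.
  intros Hm p. induction p; [lia|]. specialize (Hm p (S p) (Nat.lt_succ_diag_r p)). lia.
Qed.

Lemma meager_avoid M : meager M -> exists F : nat -> R -> Prop,
  (forall i, nowhere_dense (F i)) /\ (forall i, avoidable (F i)) /\ forall x, M x -> exists i, F i x.
Proof.
  intros [F [H1 H2]]. exists F. split; [auto|]. split; [intros i; apply nd_avoid; auto| auto].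
Qed.

Lemma density V x del : tau_I V -> V x -> 0 < del ->
  exists c d (F : nat -> R -> Prop), x - del < c /\ c < d /\ d < x + del /\
   (forall i, nowhere_dense (F i)) /\
   forall z, c < z < d -> (forall i, ~ F i z) -> V z.
Proof.
  intros [[U [M [HU [HM HV]]]] Hd] Hx Hdel.
  destruct (meager_avoid M HM) as [EM [HEM1 [HEM2 HEM3]]].
  assert (Hz : exists z, Rabs (z - x) < del /\ U z).
  { apply NNPP; intro Hno.
    destruct (Hd x Hx (fun k => k) (fun i j H => H)) as [m [Hm [N0 [HN0 Hcov]]]].
    destruct (meager_avoid N0 HN0) as [EN [_ [HEN2 HEN3]]].
    destruct (INR_unbounded (/ del)) as [P HP].
    set (A := fun j i => match j with
                         | O => EN i
                         | S j' => fun t => exists a, EM i a /\ t = INR (m (j' + P)%nat) * (a - x)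
                         end).
    assert (Hpos : / del > 0) by (apply Rinv_0_lt_compat; lra).
    assert (HmP : forall p, (P <= p)%nat -> INR (m p) > / del).
    { intros p Hp. pose proof (sinc_ge m Hm p). apply le_INR in H. apply le_INR in Hp. lra. }
    destruct (baire2 A (-1) 1) as [t [Ht1 Ht2]]; [lra| |].
    { intros [|j] i; simpl; [apply HEN2|]. apply scale_avoid; [apply HEM2|].
      specialize (HmP (j + P)%nat ltac:(lia)). lra. }
    assert (HtN : ~ N0 t). { intros Hn. destruct (HEN3 t Hn) as [i Hi]. apply (Ht2 0%nat i). exact Hi. }
    destruct (Hcov t ltac:(lra) HtN) as [Nn HNn].
    destruct (HNn (Nn + P)%nat ltac:(lia)) as [a [Ha Hta]].
    assert (Hax : Rabs (a - x) < del).
    { specialize (HmP (Nn + P)%nat ltac:(lia)).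
      set (mp := INR (m (Nn + P)%nat)) in *.
      assert (Hmd : mp * del > 1).
      { assert (/ del * del = 1) by (field; lra). nra. }
      destruct (Rabs_facts (a - x)) as [R1 [R2 R3]].
      apply Rnot_le_lt. intro Hge.
      assert (Habs : Rabs t = mp * Rabs (a - x)).
      { rewrite Hta, Rabs_mult, (Rabs_pos_eq mp); [reflexivity|lra]. }
      assert (Rabs t < 1) by (apply Rabs_def1; lra).
      nra. }
    assert (HnU : ~ U a). { intro HUa. apply Hno. exists a. auto. }
    apply HV in Ha. destruct Ha as [[HUa _]|[_ HMa]]; [contradiction|].
    destruct (HEM3 a HMa) as [i Hi]. apply (Ht2 (S Nn) i). simpl. exists a. split; auto. }
  destruct Hz as [z [Hz1 Hz2]].
  destruct (HU z Hz2) as [r Hr]. pose proof (cond_pos r) as Hr0.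
  destruct (Rabs_facts (z - x)) as [R1 [R2 _]].
  set (rho := Rmin r (del - Rabs (z - x)) / 2).
  destruct (Rmin_facts r (del - Rabs (z - x))) as [M1 [M2 M3]].
  assert (Hrho : 0 < rho) by (unfold rho; lra).
  exists (z - rho), (z + rho), EM. unfold rho in *.
  repeat split; try lra; auto.
  intros w Hw HnF. apply HV. left. split.
  - apply Hr. unfold disc. apply Rabs_def1; lra.
  - intros HMw. destruct (HEM3 w HMw) as [i Hi]. apply (HnF i Hi).
Qed.

Lemma nd_empty : nowhere_dense (fun _ => False).
Proof.
  intros x [del Hdel]. pose proof (cond_pos del).
  assert (Had : adherence (fun _ => False) x).
  { apply Hdel. unfold disc. rewrite Rminus_diag, Rabs_R0. lra. }
  destruct (Had (fun _ => True)) as [y [_ []]].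
  exists del. intros w _. exact I.
Qed.

Lemma my_open_int c d : open_set (fun z => c < z < d).
Proof.
  intros x Hx. assert (Hp : 0 < Rmin (x - c) (d - x)) by
    (destruct (Rmin_facts (x-c) (d-x)) as [_ [_ [-> | ->]]]; lra).
  exists (mkposreal _ Hp). intros y Hy. unfold disc in Hy. simpl in Hy.
  destruct (Rmin_facts (x-c) (d-x)) as [M1 [M2 _]].
  apply Rabs_def2 in Hy. lra.
Qed.

Lemma step2 f : swiatkowski tau_I f -> forall c' d', c' < d' -> forall eps, 0 < eps ->
  exists c d v (F : nat -> R -> Prop), c' < c /\ c < d /\ d < d' /\
    (forall i, nowhere_dense (F i)) /\
    forall z, c < z < d -> (forall i, ~ F i z) -> Rabs (f z - v) < eps.
Proof.
  intros Hsw c' d' Hcd eps Heps.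
  destruct (classic (exists p q, c' < p < d' /\ c' < q < d' /\ f p < f q)) as
    [[p [q [Hp [Hq Hpq]]]]|Hno].
  - destruct (Hsw p q Hpq) as [x [Hc [Hx _]]].
    destruct (Rmin_facts p q) as [_ [_ Mi]]. destruct (Rmax_facts p q) as [_ [_ Ma]].
    assert (Hx' : c' < x < d') by (destruct Mi as [Mi|Mi]; destruct Ma as [Ma|Ma];
                                  rewrite Mi, Ma in Hx; lra).
    destruct (Hc eps Heps) as [V [HV [HVx HVb]]].
    destruct (Rmin_facts (x - c') (d' - x)) as [M1 [M2 M3]].
    destruct (density V x (Rmin (x - c') (d' - x)) HV HVx) as [c [d [F [H1 [H2 [H3 [H4 H5]]]]]]].
    { destruct M3 as [-> | ->]; lra. }
    exists c, d, (f x), F. repeat split; try lra; auto.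
  - exists (c' + (d'-c')/3), (d' - (d'-c')/3), (f ((c'+d')/2)), (fun _ _ => False).
    repeat split; try lra.
    + intros; apply nd_empty.
    + intros z Hz _.
      assert (f z = f ((c'+d')/2)).
      { destruct (Rtotal_order (f z) (f ((c'+d')/2))) as [H|[H|H]]; auto; exfalso; apply Hno.
        - exists z, ((c'+d')/2). repeat split; lra.
        - exists ((c'+d')/2), z. repeat split; lra. }
      rewrite H, Rminus_diag, Rabs_R0. lra.
Qed.

Record st := mk { sc : R; sd : R; se : R; sv : R; sF : nat -> R -> Prop }.

Lemma hard f : swiatkowski tau_I f -> swiatkowski tau_star f.
Proof.
  intros Hsw a b Hab.
  destruct (Hsw a b Hab) as [x0 [Hc0 [Hx0 [Hv1 Hv2]]]].
  set (eps0 := Rmin (f x0 - f a) (f b - f x0)).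
  destruct (Rmin_facts (f x0 - f a) (f b - f x0)) as [E1 [E2 E3]].
  assert (He0 : 0 < eps0) by (unfold eps0; destruct E3 as [-> | ->]; lra).
  destruct (Hc0 eps0 He0) as [V [HV [HVx HVb]]].
  destruct (Rmin_facts (x0 - Rmin a b) (Rmax a b - x0)) as [M1 [M2 M3]].
  destruct (density V x0 (Rmin (x0 - Rmin a b) (Rmax a b - x0)) HV HVx)
    as [c0 [d0 [F0 [H1 [H2 [H3 [H4 H5]]]]]]].
  { destruct M3 as [-> | ->]; lra. }
  set (G := fun s => sc s < sd s /\ 0 < se s /\ (forall i, nowhere_dense (sF s i)) /\
     forall z, sc s < z < sd s -> (forall i, ~ sF s i z) -> Rabs (f z - sv s) < se s).
  destruct (BM st sc sd sF G (fun s s' => se s' = se s / 2)) with (s0 := mk c0 d0 eps0 (f x0) F0)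
    as [sq [y [Q0 [Q1 [Q2 Q3]]]]].
  - intros s [G1 [_ [G3 _]]]. split; auto. intros i; apply nd_avoid; auto.
  - intros s [G1 [G2 _]] c' d' K1 K2 K3.
    destruct (step2 f Hsw c' d' K2 (se s / 2) ltac:(lra)) as [c [d [v [F [L1 [L2 [L3 [L4 L5]]]]]]]].
    exists (mk c d (se s / 2) v F). unfold G; simpl. repeat split; auto; lra.
  - unfold G; simpl. repeat split; auto.
  - assert (Hy0 : Rabs (f y - f x0) < eps0).
    { destruct (Q1 0%nat) as [[_ [_ [_ G4]]] _]. rewrite Q0 in G4. simpl in G4.
      apply G4; [specialize (Q2 0%nat); rewrite Q0 in Q2; exact Q2|].
      intros i. specialize (Q3 0%nat i). rewrite Q0 in Q3. exact Q3. }
    assert (Hyr : c0 < y < d0) by (specialize (Q2 0%nat); rewrite Q0 in Q2; exact Q2).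
    assert (Hek : forall k, se (sq k) = eps0 * (/2) ^ k).
    { induction k; [rewrite Q0; simpl; ring|]. rewrite (proj2 (Q1 k)), IHk. simpl. field. }
    exists y. split; [|split].
    + intros eps Heps.
      destruct (pow_lt_1_zero (/2) ltac:(rewrite Rabs_pos_eq; lra) (eps / (2 * eps0))
                  ltac:(apply Rdiv_lt_0_compat; lra)) as [N HN].
      specialize (HN N (Nat.le_refl N)).
      assert (Hp : 0 < (/2) ^ N) by (apply pow_lt; lra).
      rewrite Rabs_pos_eq in HN; [|lra].
      assert (HeN : se (sq N) < eps / 2).
      { rewrite Hek. apply Rmult_lt_compat_l with (r := eps0) in HN; [|lra].
        replace (eps0 * (eps / (2 * eps0))) with (eps / 2) in HN by (field; lra). exact HN. }
      destruct (Q1 N) as [[G1 [G2 [G3 G4]]] _].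
      exists (fun z => sc (sq N) < z < sd (sq N) /\ ~ (exists i, sF (sq N) i z)).
      split; [|split].
      * exists (fun z => sc (sq N) < z < sd (sq N)), (fun z => exists i, sF (sq N) i z).
        split; [apply my_open_int|]. split; [|intros; tauto].
        exists (sF (sq N)). split; auto.
      * split; [apply Q2|]. intros [i Hi]. apply (Q3 N i Hi).
      * intros z [Hz1 Hz2].
        assert (Az : Rabs (f z - sv (sq N)) < se (sq N)).
        { apply G4; auto. intros i Hi; apply Hz2; eauto. }
        assert (Ay : Rabs (f y - sv (sq N)) < se (sq N)).
        { apply G4; [apply Q2|]. intros i Hi; apply (Q3 N i Hi). }
        apply Rabs_def2 in Az. apply Rabs_def2 in Ay. apply Rabs_def1; lra.
    + destruct M3 as [M3|M3]; rewrite M3 in H1, H3; lra.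
    + apply Rabs_def2 in Hy0. unfold eps0 in *. lra.
Qed.

Lemma star_I V : tau_star V -> tau_I V.
Proof.
  intros [U [M [HU [HM HV]]]].
  split.
  - exists U, (fun z => U z /\ M z). split; auto. split.
    + destruct HM as [E [HE1 HE2]]. exists E. split; auto. intros z [_ Hz]; auto.
    + intros z. rewrite HV. tauto.
  - intros x Hx n Hn. apply HV in Hx. destruct Hx as [HUx HMx].
    destruct (HU x HUx) as [r Hr]. pose proof (cond_pos r) as Hr0.
    destruct HM as [E [HE1 HE2]].
    assert (Hnp : forall p, 0 < INR (n (S p))).
    { intros p. apply lt_0_INR. specialize (Hn 0%nat (S p) ltac:(lia)). lia. }
    exists (fun k => k). split; [intros i j H; exact H|].
    exists (fun t => exists p, M (x + t / INR (n (S p)))). split.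
    + exists (fun k => let (p, i) := of_nat k in
                      fun t => E i (x + t / INR (n (S p)))).
      split.
      * intros k. destruct (of_nat k) as [p i]. apply avoid_nd.
        apply avoid_sub with (fun t => exists a, E i a /\ t = INR (n (S p)) * (a - x)).
        -- intros t Ht. exists (x + t / INR (n (S p))). split; auto.
           specialize (Hnp p). field. lra.
        -- apply scale_avoid; auto. apply nd_avoid; auto.
      * intros t [p Hp]. destruct (HE2 _ Hp) as [i Hi]. exists (to_nat (p, i)).
        rewrite cancel_of_to. exact Hi.
    + intros t Ht HMt.
      destruct (INR_unbounded (/ r)) as [N0 HN0].
      exists (S N0). intros p Hp. destruct p as [|p]; [lia|].
      assert (Hge : INR (n (S p)) > / r).
      { pose proof (sinc_ge n Hn (S p)). apply le_INR in H. apply le_INR in Hp.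
        rewrite S_INR in Hp. lra. }
      exists (x + t / INR (n (S p))). split.
      * apply HV. split.
        -- apply Hr. unfold disc.
           replace (x + t / INR (n (S p)) - x) with (t / INR (n (S p))) by ring.
           specialize (Hnp p). set (q := INR (n (S p))) in *.
           unfold Rdiv. rewrite Rabs_mult, (Rabs_pos_eq (/ q)); [|left; apply Rinv_0_lt_compat; lra].
           assert (Hrq : r * q > 1). { assert (/ r * r = 1) by (field; lra). nra. }
           assert (Habs : Rabs t <= 1) by (apply Rabs_le; lra).
           assert (Hq : q * / q = 1) by (field; lra).
           assert (0 < / q) by (apply Rinv_0_lt_compat; lra).
           nra.
        -- intros HMa. apply HMt. exists p. exact HMa.
      * specialize (Hnp p). field. lra.
Qed.

Lemma cont_star_I f x : sigma_continuous_at tau_star f x -> sigma_continuous_at tau_I f x.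
Proof.
  intros H eps Heps. destruct (H eps Heps) as [V [HV HV2]]. exists V. split; auto. apply star_I; auto.
Qed.

Theorem mainTheorem16 : forall f : R -> R,
  swiatkowski tau_I f <-> swiatkowski tau_star f.
Proof.
  intros f. split; [apply hard|].
  intros H a b Hab. destruct (H a b Hab) as [x [Hx1 Hx2]]. exists x. split; auto.
  apply cont_star_I; auto.
Qed.
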